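(* Let $h\in C[0,1]$ and $q\in C[0,1]$ with $q>0$ on $(0,1)$. Let $(c_n)_n\subset\mathbb R$ with $c_n\to c\in\mathbb R$, and for each $n$ let $z_n\in C[0,1]\cap C^1(0,1)$ satisfy $\dot z_n(\varphi)=h(\varphi)-c_n-q(\varphi)/z_n(\varphi)$ and $z_n(\varphi)<0$ for $\varphi\in(0,1)$. Suppose either (a) $(z_n)_n$ is pointwise increasing in $n$ and there is $v\in C[0,1]$ with $z_n(\varphi)\le v(\varphi)<0$ for all $n$ and $\varphi\in(0,1)$; or (b) $(z_n)_n$ is pointwise decreasing in $n$ and there is $w\in C[0,1]$ with $z_n(\varphi)\ge w(\varphi)$ for all $n$ and $\varphi\in(0,1)$. Then $z_n$ converges uniformly on $[0,1]$ to some $\bar z\in C[0,1]\cap C^1(0,1)$ satisfying $\dot{\bar z}(\varphi)=h(\varphi)-c-q(\varphi)/\bar z(\varphi)$ and $\bar z(\varphi)<0$ for $\varphi\in(0,1)$. *)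

(* Defs.v *)
From Stdlib Require Import Reals Lra.
Open Scope R_scope.

Definition cont01 (f : R -> R) : Prop :=
  forall x, 0 <= x <= 1 ->
    forall eps, 0 < eps -> exists delta, 0 < delta /\
      forall y, 0 <= y <= 1 -> Rabs (y - x) < delta -> Rabs (f y - f x) < eps.

Definition C1_open01 (f : R -> R) : Prop :=
  exists f' : R -> R, forall x, 0 < x < 1 ->
    derivable_pt_lim f x (f' x) /\ continuity_pt f' x.

Definition unif_cv01 (u : nat -> R -> R) (g : R -> R) : Prop :=
  forall eps, 0 < eps -> exists N : nat, forall n, (N <= n)%nat ->
    forall x, 0 <= x <= 1 -> Rabs (u n x - g x) < eps.

(* Main.v *)
Require Import Defs.
From Stdlib Require Import Reals Lra Lia IndefiniteDescription.
Open Scope R_scope.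

Definition cl (x : R) : R := Rmax 0 (Rmin 1 x).

Lemma cl_lip x y : Rabs (cl x - cl y) <= Rabs (x - y).
Proof.
  unfold cl, Rmax, Rmin; repeat destruct Rle_dec; unfold Rabs;
  repeat destruct Rcase_abs; lra.
Qed.

Lemma cl_in x : 0 <= cl x <= 1.
Proof. unfold cl, Rmax, Rmin; repeat destruct Rle_dec; lra. Qed.

Lemma cl_id x : 0 <= x <= 1 -> cl x = x.
Proof. intros; unfold cl, Rmax, Rmin; repeat destruct Rle_dec; lra. Qed.

Lemma cont01_ext f : cont01 f -> forall x, continuity_pt (fun t => f (cl t)) x.
Proof.
  intros Hf x. unfold continuity_pt, continue_in, limit1_in, limit_in. simpl.
  unfold R_dist. intros eps Heps.
  destruct (Hf (cl x) (cl_in x) eps Heps) as [d [Hd H]].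
  exists d; split; [lra|]. intros y [_ Hy]. apply H. apply cl_in.
  eapply Rle_lt_trans; [apply cl_lip| exact Hy].
Qed.

Lemma ext_cont01 f : (forall x, continuity_pt (fun t => f (cl t)) x) -> cont01 f.
Proof.
  intros H x Hx eps Heps. specialize (H x).
  unfold continuity_pt, continue_in, limit1_in, limit_in in H. simpl in H.
  unfold R_dist in H.
  destruct (H eps Heps) as [d [Hd Hd']]. exists d; split; [lra|].
  intros y Hy Hyx. specialize (Hd' y). rewrite (cl_id y Hy), (cl_id x Hx) in Hd'.
  destruct (Req_dec y x) as [->|Hne]; [rewrite Rminus_diag, Rabs_R0; lra|].
  apply Hd'. split; [split; [constructor| auto]| exact Hyx].
Qed.

Lemma cont01_interior f y : cont01 f -> 0 < y < 1 -> continuity_pt f y.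
Proof.
  intros Hf Hy. unfold continuity_pt, continue_in, limit1_in, limit_in. simpl.
  unfold R_dist. intros eps Heps.
  destruct (Hf y ltac:(lra) eps Heps) as [d [Hd H]].
  exists (Rmin d (Rmin y (1 - y))). split.
  { apply Rmin_glb_lt; [lra|apply Rmin_glb_lt; lra]. }
  intros t [_ Ht].
  assert (h1 := Rmin_l d (Rmin y (1-y))).
  assert (h2 := Rmin_r d (Rmin y (1-y))).
  assert (h3 := Rmin_l y (1-y)). assert (h4 := Rmin_r y (1-y)).
  revert Ht; unfold Rabs at 1; destruct Rcase_abs; intro Ht;
  (apply H; [ split; lra | unfold Rabs; destruct Rcase_abs; lra]).
Qed.

Lemma cont01_plus f g : cont01 f -> cont01 g -> cont01 (fun x => f x + g x).
Proof.
  intros Hf Hg. apply ext_cont01. intro x.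
  exact (continuity_pt_plus _ _ x (cont01_ext f Hf x) (cont01_ext g Hg x)).
Qed.

Lemma cont01_mult f g : cont01 f -> cont01 g -> cont01 (fun x => f x * g x).
Proof.
  intros Hf Hg. apply ext_cont01. intro x.
  exact (continuity_pt_mult _ _ x (cont01_ext f Hf x) (cont01_ext g Hg x)).
Qed.

Lemma cont01_const a : cont01 (fun _ => a).
Proof. intros x _ eps He. exists 1. split; [lra|]. intros. rewrite Rminus_diag, Rabs_R0. lra. Qed.

Lemma cont01_id : cont01 (fun x => x).
Proof. intros x _ eps He. exists eps. split; [lra|]. intros. lra. Qed.

Lemma cont01_bounded f : cont01 f -> exists B, forall x, 0 <= x <= 1 -> Rabs (f x) <= B.
Proof.
  intros Hf.
  destruct (continuity_ab_maj (fun t => Rabs (f (cl t))) 0 1 ltac:(lra)) as [m [Hm _]].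
  { intros c _. exact (continuity_pt_comp (fun t => f (cl t)) Rabs c
        (cont01_ext f Hf c) (Rcontinuity_abs _)). }
  exists (Rabs (f (cl m))). intros x Hx. specialize (Hm x Hx). simpl in Hm.
  rewrite cl_id in Hm; auto.
Qed.

Lemma closure_le f g a b : cont01 f -> cont01 g -> 0 <= a -> a < b -> b <= 1 ->
  (forall x, a < x < b -> f x <= g x) -> forall x, a <= x <= b -> f x <= g x.
Proof.
  intros Hf Hg Ha Hab Hb H x Hx.
  destruct (Rle_dec (f x) (g x)) as [|Hn]; auto. exfalso.
  apply Rnot_le_lt in Hn.
  set (e := (f x - g x) / 2).
  destruct (Hf x ltac:(lra) e ltac:(unfold e; lra)) as [d1 [Hd1 H1]].
  destruct (Hg x ltac:(lra) e ltac:(unfold e; lra)) as [d2 [Hd2 H2]].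
  set (m := (a + b) / 2).
  set (s := Rmin 1 (Rmin d1 d2 / (2 * (b - a)))).
  assert (Hs0 : 0 < s).
  { unfold s. apply Rmin_glb_lt; [lra|]. apply Rdiv_lt_0_compat; [|lra].
    apply Rmin_glb_lt; lra. }
  assert (Hs1 : s <= 1) by apply Rmin_l.
  assert (Hs : s <= Rmin d1 d2 / (2 * (b - a))) by apply Rmin_r.
  apply (Rmult_le_compat_r (2 * (b - a))) in Hs; [|lra].
  replace (Rmin d1 d2 / (2 * (b - a)) * (2 * (b - a))) with (Rmin d1 d2) in Hs
    by (field; lra).
  assert (Hm1 := Rmin_l d1 d2). assert (Hm2 := Rmin_r d1 d2).
  set (t := x + s * (m - x)).
  assert (Hta : a < t).
  { unfold t, m. assert (0 < s * ((a+b)/2 - a)) by (apply Rmult_lt_0_compat; lra).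
    assert (0 <= (1 - s) * (x - a)) by (apply Rmult_le_pos; lra). nra. }
  assert (Htb : t < b).
  { unfold t, m. assert (0 < s * (b - (a+b)/2)) by (apply Rmult_lt_0_compat; lra).
    assert (0 <= (1 - s) * (b - x)) by (apply Rmult_le_pos; lra). nra. }
  assert (Htx : Rabs (t - x) < Rmin d1 d2).
  { unfold t. replace (x + s * (m - x) - x) with (s * (m - x)) by ring.
    rewrite Rabs_mult, (Rabs_right s) by lra.
    assert (Rabs (m - x) <= b - a) by (unfold m, Rabs; destruct Rcase_abs; lra).
    assert (s * Rabs (m - x) <= s * (b - a)) by (apply Rmult_le_compat_l; lra).
    assert (s * (2 * (b - a)) = 2 * (s * (b - a))) by ring.
    assert (0 < Rmin d1 d2) by (apply Rmin_glb_lt; lra).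
    lra. }
  specialize (H1 t ltac:(lra) ltac:(lra)). specialize (H2 t ltac:(lra) ltac:(lra)).
  specialize (H t ltac:(lra)).
  revert H1 H2; unfold e, Rabs; repeat destruct Rcase_abs; lra.
Qed.

Lemma mono_ext g : cont01 g -> (forall x y, 0 < x -> x <= y -> y < 1 -> g x <= g y) ->
  forall x y, 0 <= x -> x <= y -> y <= 1 -> g x <= g y.
Proof.
  intros Hg H.
  assert (S1 : forall y, 0 < y < 1 -> forall x, 0 <= x <= y -> g x <= g y).
  { intros y Hy. apply (closure_le g (fun _ => g y) 0 y Hg (cont01_const _)); try lra.
    intros x Hx. apply H; lra. }
  intros x y Hx Hxy Hy.
  destruct (Req_dec x y) as [->|Hne]; [lra|].
  destruct (Req_dec x 1) as [->|Hx1]; [lra|].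
  apply (closure_le (fun _ => g x) g x 1 (cont01_const _) Hg); try lra.
  intros t Ht. apply S1; lra.
Qed.

Lemma lim_le (u : nat -> R) l B : Un_cv u l -> (forall n, u n <= B) -> l <= B.
Proof.
  intros Hu HB. destruct (Rle_dec l B) as [|Hn]; auto. apply Rnot_le_lt in Hn.
  destruct (Hu (l - B) ltac:(lra)) as [N HN]. specialize (HN N (le_n _)).
  specialize (HB N). unfold R_dist, Rabs in HN. destruct Rcase_abs; lra.
Qed.

Lemma lim_ge (u : nat -> R) l B : Un_cv u l -> (forall n, B <= u n) -> B <= l.
Proof.
  intros Hu HB. destruct (Rle_dec B l) as [|Hn]; auto. apply Rnot_le_lt in Hn.
  destruct (Hu (B - l) ltac:(lra)) as [N HN]. specialize (HN N (le_n _)).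
  specialize (HB N). unfold R_dist, Rabs in HN. destruct Rcase_abs; lra.
Qed.

Lemma lim_abs_le (u w : nat -> R) l1 l2 e : Un_cv u l1 -> Un_cv w l2 ->
  (forall n, Rabs (u n - w n) <= e) -> Rabs (l1 - l2) <= e.
Proof.
  intros Hu Hw He. destruct (Rle_dec (Rabs (l1 - l2)) e) as [|Hn]; auto.
  apply Rnot_le_lt in Hn. set (d := (Rabs (l1 - l2) - e) / 2).
  destruct (Hu d ltac:(unfold d; lra)) as [N1 H1].
  destruct (Hw d ltac:(unfold d; lra)) as [N2 H2].
  specialize (H1 (N1 + N2)%nat ltac:(lia)). specialize (H2 (N1 + N2)%nat ltac:(lia)).
  specialize (He (N1 + N2)%nat). unfold R_dist in *. revert Hn H1 H2 He. unfold d.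
  generalize (u (N1+N2)%nat) (w (N1+N2)%nat). intros a b.
  unfold Rabs; repeat destruct Rcase_abs; lra.
Qed.

Lemma cv_bounded (u : nat -> R) l : Un_cv u l -> exists C, forall n, Rabs (u n) <= C.
Proof.
  intros Hu. destruct (Hu 1 ltac:(lra)) as [N HN].
  assert (A : forall m, exists C, forall n, (n < m)%nat -> Rabs (u n) <= C).
  { induction m as [|m [C HC]].
    - exists 0. intros; lia.
    - exists (Rmax C (Rabs (u m))). intros n Hn.
      destruct (Nat.eq_dec n m) as [->|]; [apply Rmax_r|].
      eapply Rle_trans; [apply HC; lia| apply Rmax_l]. }
  destruct (A N) as [C HC]. exists (Rmax C (Rabs l + 1)). intros n.
  destruct (Nat.lt_ge_cases n N).
  - eapply Rle_trans; [apply HC; lia| apply Rmax_l].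
  - eapply Rle_trans; [|apply Rmax_r]. specialize (HN n H). unfold R_dist in HN.
    revert HN; unfold Rabs; repeat destruct Rcase_abs; lra.
Qed.

Lemma modulus (z h q : R -> R) (a M Q B : R) :
  cont01 z ->
  (forall x, 0 < x < 1 -> derivable_pt_lim z x (h x - a - q x / z x)) ->
  (forall x, 0 < x < 1 -> z x < 0) ->
  (forall x, 0 < x < 1 -> 0 < q x <= Q) ->
  (forall x, 0 < x < 1 -> Rabs (h x - a) <= M) ->
  (forall x, 0 < x < 1 -> Rabs (z x) <= B) ->
  forall x y, 0 <= x -> x <= y -> y <= 1 ->
    Rabs (z x - z y) <= M * (y - x) \/ (z x - z y) * (z x - z y) <= 2 * (M * B + Q) * (y - x).
Proof.
  intros Hz Hd Hneg Hq Hh HB.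
  set (K := M * B + Q).
  assert (Mono : forall (g g' : R -> R), cont01 g ->
     (forall t, 0 < t < 1 -> derivable_pt_lim g t (g' t)) ->
     (forall t, 0 < t < 1 -> 0 <= g' t) ->
     forall x y, 0 <= x -> x <= y -> y <= 1 -> g x <= g y).
  { intros g g' Hg Hgd Hg'. apply mono_ext; auto.
    intros x y Hx Hxy Hy. destruct (Req_dec x y) as [->|Hne]; [lra|].
    destruct (MVT_cor2 g g' x y ltac:(lra)) as [c [Hc Hcr]].
    { intros c Hc. apply Hgd. lra. }
    assert (0 <= g' c) by (apply Hg'; lra).
    assert (0 <= g' c * (y - x)) by (apply Rmult_le_pos; lra). lra. }
  assert (G1 : forall x y, 0 <= x -> x <= y -> y <= 1 -> z x + M * x <= z y + M * y).
  { apply (Mono (fun t => z t + M * t) (fun t => h t - a - q t / z t + M * 1)).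
    - exact (cont01_plus _ _ Hz (cont01_mult _ _ (cont01_const M) cont01_id)).
    - intros t Ht. exact (derivable_pt_lim_plus _ _ _ _ _ (Hd t Ht)
          (derivable_pt_lim_scal id M t 1 (derivable_pt_lim_id t))).
    - intros t Ht. specialize (Hneg t Ht). specialize (Hq t Ht). specialize (Hh t Ht).
      assert (/ z t < 0) by (apply Rinv_lt_0_compat; lra).
      assert (q t / z t < 0) by (unfold Rdiv; nra).
      revert Hh; unfold Rabs; destruct Rcase_abs; lra. }
  assert (G2 : forall x y, 0 <= x -> x <= y -> y <= 1 ->
      z x * z x + 2 * K * x <= z y * z y + 2 * K * y).
  { apply (Mono (fun t => z t * z t + 2 * K * t)
       (fun t => ((h t - a - q t / z t) * z t + z t * (h t - a - q t / z t)) + 2 * K * 1)).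
    - exact (cont01_plus _ _ (cont01_mult _ _ Hz Hz) (cont01_mult _ _ (cont01_const (2*K)) cont01_id)).
    - intros t Ht. exact (derivable_pt_lim_plus _ _ _ _ _
          (derivable_pt_lim_mult _ _ _ _ _ (Hd t Ht) (Hd t Ht))
          (derivable_pt_lim_scal id (2*K) t 1 (derivable_pt_lim_id t))).
    - intros t Ht. specialize (Hneg t Ht). specialize (Hq t Ht). specialize (Hh t Ht).
      specialize (HB t Ht).
      replace ((h t - a - q t / z t) * z t + z t * (h t - a - q t / z t))
        with (2 * ((h t - a) * z t - q t)) by (field; lra).
      assert (Rabs ((h t - a) * z t) <= M * B).
      { rewrite Rabs_mult. apply Rmult_le_compat; auto using Rabs_pos. }
      unfold K. revert H; unfold Rabs; destruct Rcase_abs; lra. }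
  assert (Z0 : forall x, 0 <= x <= 1 -> z x <= 0).
  { intros x Hx. apply (closure_le z (fun _ => 0) 0 1 Hz (cont01_const 0)); try lra.
    intros t Ht. specialize (Hneg t Ht); lra. }
  intros x y Hx Hxy Hy.
  specialize (G1 x y Hx Hxy Hy). specialize (G2 x y Hx Hxy Hy).
  assert (zx := Z0 x ltac:(lra)). assert (zy := Z0 y ltac:(lra)).
  destruct (Rle_dec (z y) (z x)).
  - left. rewrite Rabs_right by lra. lra.
  - right. fold K. nra.
Qed.

Lemma mod_small (M K : R) : 0 <= M -> 0 <= K -> forall eps, 0 < eps ->
  exists d, 0 < d /\ forall t D, 0 <= t < d ->
    (Rabs D <= M * t \/ D * D <= 2 * K * t) -> Rabs D < eps.
Proof.
  intros HM HK eps He.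
  exists (Rmin (eps / (M + 1)) (eps * eps / (2 * K + 1))). split.
  { apply Rmin_glb_lt; apply Rdiv_lt_0_compat; nra. }
  intros t D Ht HD.
  assert (h1 := Rmin_l (eps / (M + 1)) (eps * eps / (2 * K + 1))).
  assert (h2 := Rmin_r (eps / (M + 1)) (eps * eps / (2 * K + 1))).
  destruct HD as [HD|HD].
  - assert (t * (M + 1) < eps).
    { assert (t < eps / (M+1)) by lra.
      apply (Rmult_lt_compat_r (M+1)) in H; [|lra].
      replace (eps / (M+1) * (M+1)) with eps in H by (field; lra). exact H. }
    nra.
  - assert (t * (2 * K + 1) < eps * eps).
    { assert (t < eps * eps / (2 * K + 1)) by lra.
      apply (Rmult_lt_compat_r (2*K+1)) in H; [|lra].
      replace (eps * eps / (2*K+1) * (2*K+1)) with (eps * eps) in H by (field; lra). exact H. }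
    assert (D * D < eps * eps) by nra.
    assert (E : D * D = Rabs D * Rabs D) by (rewrite <- Rabs_mult; rewrite Rabs_right; nra).
    rewrite E in H0. assert (0 <= Rabs D) by apply Rabs_pos. nra.
Qed.

Lemma fin_common (P : nat -> nat -> Prop) m :
  (forall k, (k <= m)%nat -> exists N0, forall n, (N0 <= n)%nat -> P k n) ->
  exists N0, forall k, (k <= m)%nat -> forall n, (N0 <= n)%nat -> P k n.
Proof.
  induction m as [|m IH]; intros H.
  - destruct (H 0%nat (le_n _)) as [N0 HN]. exists N0. intros k Hk n Hn.
    replace k with 0%nat by lia. auto.
  - destruct IH as [N1 H1]. { intros k Hk. apply H. lia. }
    destruct (H (S m) (le_n _)) as [N2 H2]. exists (N1 + N2)%nat.
    intros k Hk n Hn. destruct (Nat.eq_dec k (S m)) as [->|].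
    + apply H2; lia.
    + apply H1; lia.
Qed.

Lemma grid (N : nat) : (0 < N)%nat -> forall m x, 0 <= x <= INR m / INR N ->
  exists k, (k <= m)%nat /\ Rabs (x - INR k / INR N) <= / INR N.
Proof.
  intros HN. assert (HN' : 0 < INR N) by (apply lt_0_INR; auto).
  induction m as [|m IH]; intros x Hx.
  - exists 0%nat. split; [lia|]. simpl in *. unfold Rdiv in *.
    rewrite Rmult_0_l in *. replace x with 0 by lra.
    rewrite Rminus_diag, Rabs_R0. left; apply Rinv_0_lt_compat; auto.
  - destruct (Rle_dec x (INR m / INR N)).
    + destruct (IH x ltac:(lra)) as [k [Hk Hk']]. exists k; split; [lia|auto].
    + exists (S m). split; [lia|]. rewrite S_INR in *.
      replace ((INR m + 1) / INR N) with (INR m / INR N + / INR N) in * by (field; lra).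
      unfold Rabs; destruct Rcase_abs; lra.
Qed.

Lemma inv_diff (p a b m Q : R) : 0 < m -> a <= - m -> b <= - m -> 0 <= p <= Q ->
  Rabs (p / a - p / b) <= Q * Rabs (b - a) / (m * m).
Proof.
  intros Hm Ha Hb Hp.
  replace (p / a - p / b) with (p * (b - a) * / (a * b)) by (field; split; lra).
  rewrite Rabs_mult, Rabs_mult, Rabs_inv.
  rewrite (Rabs_right (a * b)) by nra. rewrite (Rabs_right p) by lra.
  unfold Rdiv. rewrite !Rmult_assoc.
  apply Rmult_le_compat; try lra.
  - apply Rmult_le_pos; [apply Rabs_pos| left; apply Rinv_0_lt_compat; nra].
  - apply Rmult_le_compat_l; [apply Rabs_pos|]. apply Rinv_le_contravar; nra.
Qed.

Theorem lemma3p3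
  (h q : R -> R) (cs : nat -> R) (c : R) (z : nat -> R -> R)
  (Hh : cont01 h) (Hq : cont01 q)
  (Hqpos : forall x, 0 < x < 1 -> 0 < q x)
  (Hcs : Un_cv cs c)
  (Hzc : forall n, cont01 (z n))
  (Hz1 : forall n, C1_open01 (z n))
  (Hzode : forall n x, 0 < x < 1 ->
      derivable_pt_lim (z n) x (h x - cs n - q x / z n x))
  (Hzneg : forall n x, 0 < x < 1 -> z n x < 0)
  (Hcase :
     ((forall n x, 0 < x < 1 -> z n x <= z (S n) x) /\
      exists v : R -> R, cont01 v /\
        forall n x, 0 < x < 1 -> z n x <= v x /\ v x < 0)
     \/
     ((forall n x, 0 < x < 1 -> z (S n) x <= z n x) /\
      exists w : R -> R, cont01 w /\
        forall n x, 0 < x < 1 -> w x <= z n x)) :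
  exists zbar : R -> R,
    unif_cv01 z zbar /\ cont01 zbar /\ C1_open01 zbar /\
    forall x, 0 < x < 1 ->
      derivable_pt_lim zbar x (h x - c - q x / zbar x) /\ zbar x < 0.
Proof.
  destruct (cont01_bounded h Hh) as [H0 HH].
  destruct (cont01_bounded q Hq) as [Q0 HQ].
  destruct (cv_bounded cs c Hcs) as [C0 HC].
  assert (Struct : exists u B, cont01 u /\
     (forall x, 0 < x < 1 -> u x < 0 /\ forall n, z n x <= u x) /\
     (forall n x, 0 < x < 1 -> Rabs (z n x) <= B) /\
     (forall x, 0 <= x <= 1 -> exists l, Un_cv (fun n => z n x) l)).
  { destruct Hcase as [[Hmon [v [Hv Hvb]]] | [Hmon [w [Hw Hwb]]]].
    - assert (Hm0 : forall n x, 0 < x < 1 -> z 0%nat x <= z n x).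
      { induction n; intros x Hx; [lra|]. specialize (IHn x Hx).
        specialize (Hmon n x Hx). lra. }
      destruct (cont01_bounded (z 0%nat) (Hzc 0%nat)) as [B HB].
      exists v, B. split; [exact Hv|]. split; [|split].
      + intros x Hx. split; [apply (Hvb 0%nat x Hx)|]. intros n; apply (Hvb n x Hx).
      + intros n x Hx. specialize (Hm0 n x Hx). assert (A1 := Hzneg n x Hx).
        assert (A2 := Hzneg 0%nat x Hx). assert (A3 := HB x ltac:(lra)).
        revert A3; unfold Rabs; repeat destruct Rcase_abs; lra.
      + intros x Hx.
        assert (Gr : Un_growing (fun n => z n x)).
        { intro n. apply (closure_le (z n) (z (S n)) 0 1 (Hzc n) (Hzc (S n))); try lra.
          intros t Ht; apply Hmon; auto. }
        assert (Ub : has_ub (fun n => z n x)).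
        { exists 0. intros y [i ->].
          apply (closure_le (z i) (fun _ => 0) 0 1 (Hzc i) (cont01_const 0)); try lra.
          intros t Ht. specialize (Hzneg i t Ht). lra. }
        destruct (growing_cv _ Gr Ub) as [l Hl]. exists l; exact Hl.
    - assert (Hm0 : forall n x, 0 < x < 1 -> z n x <= z 0%nat x).
      { induction n; intros x Hx; [lra|]. specialize (IHn x Hx).
        specialize (Hmon n x Hx). lra. }
      destruct (cont01_bounded w Hw) as [B HB].
      exists (z 0%nat), B. split; [exact (Hzc 0%nat)|]. split; [|split].
      + intros x Hx. split; [apply (Hzneg 0%nat x Hx)|]. intros n; apply (Hm0 n x Hx).
      + intros n x Hx. specialize (Hwb n x Hx). assert (A1 := Hzneg n x Hx).
        assert (A3 := HB x ltac:(lra)).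
        revert A3; unfold Rabs; repeat destruct Rcase_abs; lra.
      + intros x Hx.
        assert (Gr : Un_decreasing (fun n => z n x)).
        { intro n. apply (closure_le (z (S n)) (z n) 0 1 (Hzc (S n)) (Hzc n)); try lra.
          intros t Ht; apply Hmon; auto. }
        assert (Lb : has_lb (fun n => z n x)).
        { exists (- w x). intros y [i ->]. unfold opp_seq.
          assert (w x <= z i x); [|lra].
          apply (closure_le w (z i) 0 1 Hw (Hzc i)); try lra.
          intros t Ht. apply Hwb; auto. }
        destruct (decreasing_cv _ Gr Lb) as [l Hl]. exists l; exact Hl. }
  destruct Struct as [u [B [Hu [Hub [HB HPL]]]]].
  set (M := H0 + C0).
  assert (HMnn : 0 <= M).
  { assert (A1 := HH 0 ltac:(lra)). assert (A2 := HC 0%nat).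
    assert (A3 := Rabs_pos (h 0)). assert (A4 := Rabs_pos (cs 0%nat)). unfold M; lra. }
  assert (HBnn : 0 <= B).
  { assert (A1 := HB 0%nat (1/2) ltac:(lra)). assert (A3 := Rabs_pos (z 0%nat (1/2))). lra. }
  assert (HQnn : 0 <= Q0).
  { assert (A1 := HQ 0 ltac:(lra)). assert (A3 := Rabs_pos (q 0)). lra. }
  assert (Hmod : forall n x y, 0 <= x -> x <= y -> y <= 1 ->
     Rabs (z n x - z n y) <= M * (y - x) \/
     (z n x - z n y) * (z n x - z n y) <= 2 * (M * B + Q0) * (y - x)).
  { intro n. apply (modulus (z n) h q (cs n) M Q0 B); auto.
    - intros x Hx; split; [apply Hqpos; auto|].
      eapply Rle_trans; [apply Rle_abs| apply HQ; lra].
    - intros x Hx. assert (A1 := HH x ltac:(lra)). assert (A2 := HC n).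
      unfold M; revert A1 A2; unfold Rabs; repeat destruct Rcase_abs; lra. }
  assert (UE : forall eps, 0 < eps -> exists d, 0 < d /\ forall n x y,
     0 <= x <= 1 -> 0 <= y <= 1 -> Rabs (x - y) < d -> Rabs (z n x - z n y) < eps).
  { intros eps He.
    destruct (mod_small M (M * B + Q0) HMnn ltac:(nra) eps He) as [d [Hd Hds]].
    exists d; split; auto. intros n x y Hx Hy Hxy.
    destruct (Rle_dec x y).
    - apply (Hds (y - x)).
      + revert Hxy; unfold Rabs; destruct Rcase_abs; lra.
      + apply Hmod; lra.
    - rewrite Rabs_minus_sym. apply (Hds (x - y)).
      + revert Hxy; unfold Rabs; destruct Rcase_abs; lra.
      + apply Hmod; lra. }
  assert (Hch : forall x, exists l, 0 <= x <= 1 -> Un_cv (fun n => z n x) l).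
  { intro x. destruct (Rle_dec 0 x); [destruct (Rle_dec x 1)|].
    - destruct (HPL x) as [l Hl]; [lra|]. exists l; auto.
    - exists 0; intros; lra.
    - exists 0; intros; lra. }
  destruct (functional_choice _ Hch) as [zb Hzb].
  assert (ZUE : forall eps, 0 < eps -> exists d, 0 < d /\ forall x y,
     0 <= x <= 1 -> 0 <= y <= 1 -> Rabs (x - y) < d -> Rabs (zb x - zb y) <= eps).
  { intros eps He. destruct (UE eps He) as [d [Hd Hdd]]. exists d; split; auto.
    intros x y Hx Hy Hxy.
    apply (lim_abs_le (fun n => z n x) (fun n => z n y)); auto.
    intro n; left; apply Hdd; auto. }
  assert (Hcont : cont01 zb).
  { intros x Hx eps He. destruct (ZUE (eps / 2) ltac:(lra)) as [d [Hd Hdd]].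
    exists d; split; auto. intros y Hy Hyx. specialize (Hdd y x Hy Hx Hyx). lra. }
  assert (Hunif : unif_cv01 z zb).
  { intros eps He.
    destruct (UE (eps / 3) ltac:(lra)) as [d [Hd Hdd]].
    destruct (ZUE (eps / 3) ltac:(lra)) as [d' [Hd' Hdd']].
    destruct (archimed_cor1 (Rmin d d')) as [N [HN HN0]].
    { apply Rmin_glb_lt; auto. }
    assert (HNr : 0 < INR N) by (apply lt_0_INR; lia).
    assert (Hgr : forall k, (k <= N)%nat -> 0 <= INR k / INR N <= 1).
    { intros k Hk. apply le_INR in Hk. assert (0 <= INR k) by apply pos_INR.
      split. { unfold Rdiv; apply Rmult_le_pos; [lra| left; apply Rinv_0_lt_compat; lra]. }
      apply (Rmult_le_reg_r (INR N)); auto.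
      replace (INR k / INR N * INR N) with (INR k) by (field; lra). lra. }
    destruct (fin_common (fun k n => (k <= N)%nat ->
        Rabs (z n (INR k / INR N) - zb (INR k / INR N)) < eps / 3) N) as [N0 HN0'].
    { intros k Hk.
      destruct (Hzb _ (Hgr k Hk) (eps / 3) ltac:(lra)) as [N1 HN1].
      exists N1. intros n Hn _. apply HN1; lia. }
    exists N0. intros n Hn x Hx.
    destruct (grid N HN0 N x) as [k [Hk Hkx]].
    { replace (INR N / INR N) with 1 by (field; lra). lra. }
    specialize (HN0' k Hk n Hn Hk).
    assert (Hm1 := Rmin_l d d'). assert (Hm2 := Rmin_r d d').
    specialize (Hdd n x (INR k / INR N) Hx (Hgr k Hk) ltac:(lra)).
    specialize (Hdd' (INR k / INR N) x (Hgr k Hk) Hx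
       ltac:(rewrite Rabs_minus_sym; lra)).
    revert Hdd Hdd' HN0'.
    generalize (z n x) (zb x) (z n (INR k / INR N)) (zb (INR k / INR N)).
    intros a1 a2 a3 a4. unfold Rabs; repeat destruct Rcase_abs; lra. }
  assert (Hzbu : forall x, 0 < x < 1 -> zb x <= u x).
  { intros x Hx. apply (lim_le (fun n => z n x)); [apply Hzb; lra|].
    intro n; apply Hub; auto. }
  assert (Hzbneg : forall x, 0 < x < 1 -> zb x < 0).
  { intros x Hx. specialize (Hzbu x Hx). destruct (Hub x Hx). lra. }
  assert (Hder : forall x0, 0 < x0 < 1 -> derivable_pt_lim zb x0 (h x0 - c - q x0 / zb x0)).
  { intros x0 Hx0.
    destruct (Hub x0 Hx0) as [Hu0 _].
    set (m := - u x0 / 2).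
    assert (Hm : 0 < m) by (unfold m; lra).
    destruct (Hu x0 ltac:(lra) m Hm) as [du [Hdu Hdu']].
    set (r := Rmin du (Rmin x0 (1 - x0)) / 2).
    assert (Hr : 0 < r).
    { unfold r. assert (0 < Rmin du (Rmin x0 (1 - x0))); [|lra].
      apply Rmin_glb_lt; [lra| apply Rmin_glb_lt; lra]. }
    assert (Hball : forall y, Boule x0 (mkposreal r Hr) y -> 0 < y < 1 /\ u y <= - m).
    { intros y Hy. unfold Boule in Hy; simpl in Hy.
      assert (h1 := Rmin_l du (Rmin x0 (1-x0))). assert (h2 := Rmin_r du (Rmin x0 (1-x0))).
      assert (h3 := Rmin_l x0 (1-x0)). assert (h4 := Rmin_r x0 (1-x0)).
      assert (Hpos : 0 < Rmin du (Rmin x0 (1 - x0))) by (unfold r in Hr; lra).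
      assert (Hy01 : 0 < y < 1) by (unfold r in Hy; revert Hy; unfold Rabs; destruct Rcase_abs; lra).
      split; auto.
      assert (A := Hdu' y ltac:(lra) ltac:(unfold r in Hy; lra)).
      unfold m in *. revert A; unfold Rabs; destruct Rcase_abs; lra. }
    apply (CVU_derivable z (fun n y => h y - cs n - q y / z n y) zb
             (fun y => h y - c - q y / zb y) x0 (mkposreal r Hr)).
    - intros eps He.
      destruct (Hcs (eps / 2) ltac:(lra)) as [N1 HN1].
      set (e0 := eps * (m * m) / (2 * (Q0 + 1))).
      assert (He0 : 0 < e0).
      { unfold e0. apply Rdiv_lt_0_compat; [apply Rmult_lt_0_compat; nra| lra]. }
      destruct (Hunif e0 He0) as [N2 HN2].
      exists (N1 + N2)%nat. intros n y Hn Hy. destruct (Hball y Hy) as [Hy01 Huy].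
      specialize (HN1 n ltac:(lia)). unfold R_dist in HN1.
      specialize (HN2 n ltac:(lia) y ltac:(lra)).
      assert (Hzn : z n y <= - m) by (destruct (Hub y Hy01) as [_ A]; specialize (A n); lra).
      assert (Hzb' : zb y <= - m) by (specialize (Hzbu y Hy01); lra).
      assert (Hqy : 0 <= q y <= Q0).
      { split; [left; apply Hqpos; auto|].
        eapply Rle_trans; [apply Rle_abs| apply HQ; lra]. }
      assert (I := inv_diff (q y) (z n y) (zb y) m Q0 Hm Hzn Hzb' Hqy).
      replace (h y - c - q y / zb y - (h y - cs n - q y / z n y))
        with ((cs n - c) + (q y / z n y - q y / zb y)) by ring.
      assert (Hb : Q0 * Rabs (zb y - z n y) / (m * m) < eps / 2).
      { rewrite Rabs_minus_sym. set (X := Rabs (z n y - zb y)) in *.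
        assert (HX : 0 <= X) by apply Rabs_pos.
        assert (E1 : e0 * (2 * (Q0 + 1)) = eps * (m * m)) by (unfold e0; field; lra).
        apply (Rmult_lt_reg_r (m * m)); [nra|].
        replace (Q0 * X / (m * m) * (m * m)) with (Q0 * X) by (field; lra).
        assert (Q0 * X <= Q0 * e0) by (apply Rmult_le_compat_l; lra).
        nra. }
      eapply Rle_lt_trans; [apply Rabs_triang|]. lra.
    - intros y Hy. apply Hzb. destruct (Hball y Hy); lra.
    - intros n y Hy. apply Hzode. apply Hball; auto.
    - unfold Boule; simpl. rewrite Rminus_diag, Rabs_R0. exact Hr. }
  assert (Hcd : forall x0, 0 < x0 < 1 -> continuity_pt (fun x => h x - c - q x / zb x) x0).
  { intros x0 Hx0.
    assert (Hne : zb x0 <> 0) by (specialize (Hzbneg x0 Hx0); lra).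
    exact (continuity_pt_minus _ _ x0
      (continuity_pt_minus _ _ x0 (cont01_interior h x0 Hh Hx0)
         (continuity_pt_const (fun _ => c) x0 (fun _ _ => eq_refl)))
      (continuity_pt_div _ _ x0 (cont01_interior q x0 Hq Hx0)
         (cont01_interior zb x0 Hcont Hx0) Hne)). }
  exists zb. split; [exact Hunif|]. split; [exact Hcont|]. split.
  - exists (fun x => h x - c - q x / zb x). intros x Hx. split; auto.
  - intros x Hx. split; auto.
Qed.
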